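(* Let $n,i$ be natural numbers and let $A$ be a brace of cardinality $p^n$, where $p$ is a prime with $p>n+1$. Then $\mathrm{ann}(p^i)=\{a\in A: p^ia=0\}$ is an ideal of $A$.
   Context: A (left) brace is a set $A$ with binary operations $+,\circ$ such that $(A,+)$ is an abelian group, $(A,\circ)$ is a group, and $a\circ(b+c)+a=a\circ b+a\circ c$ for all $a,b,c$. Write $a*b=a\circ b-a-b$. An ideal of a brace $A$ is a subgroup $I$ of $(A,+)$ which is a normal subgroup of $(A,\circ)$ and satisfies $a*x\in I$ for all $a\in A$, $x\in I$; equivalently, an additive subgroup $I$ with $A*I\subseteq I$ and $I*A\subseteq I$. $p^ia$ denotes the $p^i$-fold additive multiple of $a$. *)

(* Defs.v *)
From HB Require Import structures.
From mathcomp Require Import all_boot all_algebra.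
Set Implicit Arguments. Unset Strict Implicit. Unset Printing Implicit Defensive.
Import GRing.Theory.
Local Open Scope ring_scope.

Record brace (T : zmodType) := Brace {
  circ : T -> T -> T;
  cinv : T -> T;
  cone : T;
  circA : forall a b c, circ a (circ b c) = circ (circ a b) c;
  circ1g : forall a, circ cone a = a;
  circg1 : forall a, circ a cone = a;
  circVg : forall a, circ (cinv a) a = cone;
  circgV : forall a, circ a (cinv a) = cone;
  brace_dist : forall a b c, circ a (b + c) + a = circ a b + circ a c
}.

Definition bstar (T : zmodType) (B : brace T) (a b : T) : T :=
  circ B a b - a - b.

Definition is_ideal (T : finZmodType) (B : brace T) (I : {set T}) : Prop :=
  [/\ (0 \in I) /\ (forall x y, x \in I -> y \in I -> x - y \in I),
      [/\ cone B \in I,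
          (forall x y, x \in I -> y \in I -> circ B x y \in I),
          (forall x, x \in I -> cinv B x \in I) &
          (forall g x, x \in I -> circ B (circ B g x) (cinv B g) \in I)] &
      (forall a x, x \in I -> bstar B a x \in I)].

Definition ann (T : finZmodType) (m : nat) : {set T} := [set a : T | a *+ m == 0].

(* Main.v *)
Require Import Defs.
From mathcomp Require Import all_boot all_algebra all_fingroup all_solvable.
Set Implicit Arguments. Unset Strict Implicit. Unset Printing Implicit Defensive.
Import GRing.Theory.
Local Open Scope ring_scope.

Lemma af0 (T : zmodType) (f : T -> T) : (forall u v, f (u+v) = f u + f v) -> f 0 = 0.
Proof. move=> fD; have := fD 0 0; rewrite addr0 => h.
by apply: (addrI (f 0)); rewrite addr0 -h. Qed.

Lemma afN (T : zmodType) (f : T -> T) : (forall u v, f (u+v) = f u + f v) ->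
  forall u, f (- u) = - f u.
Proof. move=> fD u; apply: (addrI (f u)); by rewrite -fD !subrr af0. Qed.

Lemma afB (T : zmodType) (f : T -> T) : (forall u v, f (u+v) = f u + f v) ->
  forall u v, f (u - v) = f u - f v.
Proof. by move=> fD u v; rewrite fD afN. Qed.

Lemma afMn (T : zmodType) (f : T -> T) : (forall u v, f (u+v) = f u + f v) ->
  forall u m, f (u *+ m) = f u *+ m.
Proof. move=> fD u; elim=> [|m IH]; first by rewrite !mulr0n af0.
by rewrite !mulrS fD IH. Qed.

Lemma afsum (T : zmodType) (f : T -> T) : (forall u v, f (u+v) = f u + f v) ->
  forall n (F : 'I_n -> T), f (\sum_(k < n) F k) = \sum_(k < n) f (F k).
Proof. move=> fD n F; apply: (big_morph f fD (af0 fD)). Qed.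

Lemma afiter (T : zmodType) (f : T -> T) : (forall u v, f (u+v) = f u + f v) ->
  forall k u v, iter k f (u+v) = iter k f u + iter k f v.
Proof. move=> fD; elim=> [//|k IH] u v /=; by rewrite IH fD. Qed.

Lemma iter0 (T : zmodType) (f : T -> T) : (forall u v, f (u+v) = f u + f v) ->
  forall k, iter k f 0 = 0.
Proof. move=> fD k; exact: (af0 (afiter fD k)). Qed.

Definition lam (T : zmodType) (B : brace T) a y := circ B a y - a.

Lemma circ0 (T : zmodType) (B : brace T) a : circ B a 0 = a.
Proof. have := brace_dist B a 0 0; rewrite addr0 => /addrI //. Qed.

Lemma cone0 (T : zmodType) (B : brace T) : cone B = 0.
Proof. by rewrite -(circ0 B (cone B)) circ1g. Qed.

Lemma circD (T : zmodType) (B : brace T) a u v : circ B a (u + v) = circ B a u + circ B a v - a.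
Proof. by rewrite -brace_dist addrK. Qed.

Lemma lamD (T : zmodType) (B : brace T) a u v : lam B a (u + v) = lam B a u + lam B a v.
Proof. by rewrite /lam circD -!addrA; congr (_ + _); rewrite addrCA. Qed.

Lemma lamM (T : zmodType) (B : brace T) a b y : lam B a (lam B b y) = lam B (circ B a b) y.
Proof. have := afB (lamD B a) (circ B b y) b; rewrite /lam => ->.
by rewrite circA opprB addrA subrK. Qed.

Lemma circE (T : zmodType) (B : brace T) a b : circ B a b = a + lam B a b.
Proof. by rewrite /lam addrC subrK. Qed.

Lemma lam1 (T : zmodType) (B : brace T) y : lam B (cone B) y = y.
Proof. by rewrite /lam circ1g cone0 subr0. Qed.

Lemma circ_inj (T : zmodType) (B : brace T) a : injective (circ B a).
Proof. move=> u v h. by rewrite -(circ1g B u) -(circVg B a) -circA h circA circVg circ1g. Qed.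

Lemma lam_inj (T : zmodType) (B : brace T) a : injective (lam B a).
Proof. move=> u v; rewrite /lam => /addIr; exact: circ_inj. Qed.

Lemma iter_lam (T : zmodType) (B : brace T) x k y :
  iter k (lam B x) y = lam B (iter k (circ B x) (cone B)) y.
Proof. elim: k => [|k IH] /=; first by rewrite lam1. by rewrite IH lamM. Qed.

Lemma circ_pow (T : finZmodType) (B : brace T) x :
  iter #|T| (circ B x) (cone B) = cone B.
Proof.
pose rho g : {perm T} := perm (@circ_inj _ B g).
have rhoE g y : rho g y = circ B g y by rewrite permE.
have gR : group_set (rho @: [set: T]).
  apply/group_setP; split.
    apply/imsetP; exists (cone B) => //; apply/permP => y.
    by rewrite rhoE perm1 circ1g.
  move=> _ _ /imsetP[g _ ->] /imsetP[h _ ->]; apply/imsetP.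
  exists (circ B h g) => //; apply/permP => y; by rewrite permM !rhoE circA.
pose G := Group gR.
have cG : #|G| = #|T|.
  rewrite /= card_imset ?cardsT // => g h e.
  by rewrite -(circg1 B g) -(circg1 B h) -!rhoE e.
have xG : rho x \in G by apply/imsetP; exists x.
have := order_dvdG xG; rewrite cG order_dvdn => /eqP h.
have e := congr1 (fun s : {perm T} => s (cone B)) h; rewrite /= permX perm1 in e.
rewrite -[in RHS]e; apply: eq_iter => y; by rewrite rhoE.
Qed.

Lemma card_gt1 (T : finType) (S : {set T}) a b : a \in S -> b \in S -> a != b -> (1 < #|S|)%N.
Proof.
move=> aS bS ab; rewrite -[2%N]/((true).+1) -ab -cards2; apply: subset_leq_card.
by apply/subsetP => z; rewrite !inE => /orP[]/eqP->.
Qed.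

Lemma zgroup_set (T : finZmodType) (S : {set T}) :
  0 \in S -> (forall u v, u \in S -> v \in S -> u + v \in S) -> group_set S.
Proof. by move=> S0 SD; apply/group_setP; split => // u v uS vS; apply: SD. Qed.

Lemma card_pow (T : finZmodType) p n (S : {set T}) :
  prime p -> #|T| = (p ^ n)%N ->
  0 \in S -> (forall u v, u \in S -> v \in S -> u + v \in S) ->
  exists2 k, (k <= n)%N & #|S| = (p ^ k)%N.
Proof.
move=> pp cT S0 SD; pose G := Group (zgroup_set S0 SD).
have := cardSg (subsetT G); rewrite cardsT cT.
by case/(dvdn_pfactor _ _ pp) => k kn e; exists k.
Qed.

Lemma fixpt (T : finZmodType) p n (f : T -> T) (S : {set T}) (finj : injective f) :
  prime p -> #|T| = (p ^ n)%N -> (forall u v, f (u+v) = f u + f v) ->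
  (forall y, iter (p ^ n) f y = y) ->
  0 \in S -> (forall u v, u \in S -> v \in S -> u + v \in S) ->
  (forall y, y \in S -> f y \in S) ->
  forall y0, y0 \in S -> y0 != 0 -> exists2 z, z \in S & (z != 0) && (f z == z).
Proof.
move=> pp cT fD fid S0 SD fS y0 y0S y0n.
pose s : {perm T} := perm finj.
have sE y : s y = f y by rewrite permE.
have pG : pgroup p <[s]>%g.
  apply: (@pnat_dvd _ (p ^ n)); last by rewrite pnatX pnat_id.
  rewrite order_dvdn; apply/eqP/permP => y; rewrite permX perm1 -{2}(fid y).
  by apply: eq_iter => z; rewrite sE.
have iS k y : y \in S -> iter k f y \in S.
  by elim: k => [//|k IH] yS /=; apply: fS; apply: IH.
have aS : [acts <[s]>%g, on S | 'P].
  rewrite cycle_subG; apply/astabsP => y /=; rewrite apermE sE.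
  apply/idP/idP; last exact: fS.
  move=> fyS; rewrite -(fid y).
  have : (0 < p ^ n)%N by rewrite expn_gt0 prime_gt0.
  case: (p ^ n)%N => [//|k] _; rewrite iterSr; exact: iS.
have := pgroup_fix_mod pG aS.
have [k kn cS] := card_pow pp cT S0 SD.
have k0 : (0 < k)%N.
  case: k {kn} cS => [|//] cS.
  by have := card_gt1 y0S S0 y0n; rewrite cS.
rewrite cS -(prednK k0) expnS modnMr => /esym/eqP.
set F := ('Fix_(S | 'P)(<[s]>))%g => /eqP Fp.
have F0 : 0 \in F.
  rewrite inE S0 /= afix_cycle; apply/afix1P; rewrite /= apermE sE.
  exact: af0.
have : ~~ (F \subset [set 0]).
  apply/negP => sub; have := subset_leq_card sub; rewrite cards1.
  have Fpos : (0 < #|F|)%N by apply/card_gt0P; exists 0.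
  have : (p %| #|F|)%N by rewrite /dvdn Fp.
  move=> /(dvdn_leq Fpos) pF F1; have := prime_gt1 pp.
  by rewrite ltnNge (leq_trans pF F1).
case/subsetPn => z zF; rewrite inE => zn; exists z.
  by move: zF; rewrite inE => /andP[].
rewrite zn /=; move: zF; rewrite inE => /andP[_]; rewrite afix_cycle.
by move/afix1P; rewrite /= apermE sE => ->.
Qed.

Lemma nil_gen (T : finZmodType) p n (f : T -> T) (finj : injective f) :
  prime p -> #|T| = (p ^ n)%N -> (forall u v, f (u+v) = f u + f v) ->
  (forall y, iter (p ^ n) f y = y) ->
  forall y, iter n (fun z => f z - z) y = 0.
Proof.
move=> pp cT fD fid.
set L := fun z => f z - z.
have LD u v : L (u + v) = L u + L v by rewrite /L fD opprD addrACA.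
suff claim : forall k (S : {set T}), 0 \in S -> (forall u v, u \in S -> v \in S -> u + v \in S) ->
  (forall y, y \in S -> L y \in S) -> (#|S| <= p ^ k)%N -> forall y, y \in S -> iter k L y = 0.
  move=> y; apply: (claim n [set: T]); try (by move=> *; rewrite inE); by rewrite ?inE ?cardsT ?cT.
elim=> [|k IH] S S0 SD SL cS y yS.
  apply/eqP; apply: contraTT cS => yn; rewrite -ltnNge expn0.
  exact: card_gt1 yS S0 yn.
case: (pickP (fun y0 => (y0 \in S) && (y0 != 0))) => [y0 /andP[y0S y0n] | none]; last first.
  have := none y; rewrite /= yS /= => /negbFE/eqP ->.
  exact: (iter0 LD k.+1).
have fS u : u \in S -> f u \in S.
  move=> uS; have -> : f u = u + L u by rewrite /L addrC subrK.
  by apply: SD => //; apply: SL.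
have LS : L =1 fun z => f z - z by [].
have [z zS /andP[zn /eqP fz]] := fixpt finj pp cT fD fid S0 SD fS y0S y0n.
have Lz : L z = 0 by rewrite /L fz subrr.
have L0 : L 0 = 0 := af0 LD.
pose S' := L @: S.
have S'0 : 0 \in S' by rewrite -L0 imset_f.
have S'D u v : u \in S' -> v \in S' -> u + v \in S'.
  move=> /imsetP[a aS ->] /imsetP[b bS ->]; rewrite -LD imset_f //; exact: SD.
have S'L u : u \in S' -> L u \in S'.
  by move=> /imsetP[a aS ->]; rewrite imset_f // SL.
have ltS : (#|S'| < #|S|)%N.
  rewrite ltn_neqAle leq_imset_card andbT; apply/negP => /imset_injP inj.
  by move: zn; rewrite (inj z 0) ?eqxx // Lz L0.
have [a _ ca] := card_pow pp cT S0 SD.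
have [b _ cb] := card_pow pp cT S'0 S'D.
have p1 := prime_gt1 pp.
move: ltS cS; rewrite ca cb ltn_exp2l // leq_exp2l // => ba ak.
rewrite iterSr; apply: (IH S') => //.
  by rewrite cb leq_exp2l // -ltnS (leq_trans ba ak).
by rewrite imset_f.
Qed.

Lemma bin_div p i k : prime p -> (k.+1 < p)%N -> (p ^ i %| 'C(p ^ i, k.+1))%N.
Proof.
move=> pp kp.
have cop : coprime (p ^ i) k.+1.
  by apply: coprimeXl; rewrite prime_coprime // gtnNdvd.
by rewrite -(Gauss_dvdl _ cop) mulnC -mul_bin_diag dvdn_mulr.
Qed.

Lemma kill (T : zmodType) (L : T -> T) n (c : nat -> nat) z :
  (forall u v, L (u+v) = L u + L v) -> c 0%N = 1%N -> (forall y, iter n L y = 0) ->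
  \sum_(k < n) iter k L z *+ c k = 0 -> z = 0.
Proof.
move=> LD c0 nil W.
suff H : forall m, iter (n - m) L z = 0 by have := H n; rewrite subnn.
elim=> [|m IH]; first by rewrite subn0 nil.
case: (ltnP m n) => mn.
  have e : (n - m = (n - m.+1).+1)%N by rewrite subnS prednK // subn_gt0.
  have n0 : (0 < n)%N by apply: leq_ltn_trans mn.
  have := congr1 (iter (n - m.+1) L) W.
  rewrite (iter0 LD) (afsum (afiter LD (n - m.+1))) (bigD1 (Ordinal n0)) //=.
  rewrite big1 ?addr0 ?c0 //.
  move=> k; rewrite -val_eqE /= => k0.
  rewrite (afMn (afiter LD _)) -iterD.
  have -> : (n - m.+1 + k = (k.-1) + (n - m))%N.
    by rewrite e addnS -addSn prednK ?lt0n // addnC.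
  by rewrite iterD IH (iter0 LD) mul0rn.
have h1 : (n - m.+1 = 0)%N by apply/eqP; rewrite subn_eq0 (leq_trans mn).
have h2 : (n - m = 0)%N by apply/eqP; rewrite subn_eq0.
by rewrite h1; rewrite h2 in IH.
Qed.


Lemma pwF (T : zmodType) (B : brace T) n x :
  iter n (bstar B x) x = 0 ->
  forall m, iter m (circ B x) 0 = \sum_(k < n) iter k (bstar B x) x *+ 'C(m, k.+1).
Proof.
move=> nil.
have LD u v : bstar B x (u + v) = bstar B x u + bstar B x v.
  by rewrite /bstar -!/(lam B x _) lamD opprD addrACA.
elim=> [|m IH] /=.
  by rewrite big1 // => k _; rewrite bin0n mulr0n.
rewrite circE IH.
have -> : lam B x (\sum_(k < n) iter k (bstar B x) x *+ 'C(m, k.+1)) =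
   \sum_(k < n) iter k (bstar B x) x *+ 'C(m, k.+1) +
   \sum_(k < n) iter k.+1 (bstar B x) x *+ 'C(m, k.+1).
  set P := \sum_(k < n) _.
  have -> : lam B x P = P + bstar B x P by rewrite /bstar -/(lam B x _) addrC subrK.
  congr (_ + _); rewrite (afsum LD); apply: eq_bigr => k _.
  by rewrite (afMn LD).
under eq_bigr => k _ do rewrite binS mulrnDr.
rewrite big_split /= addrCA; congr (_ + _).
have h : \sum_(k < n.+1) iter k (bstar B x) x *+ 'C(m, k) =
  \sum_(k < n) iter k (bstar B x) x *+ 'C(m, k) by rewrite big_ord_recr /= nil mul0rn addr0.
rewrite -h big_ord_recl /= bin0 mulr1n; congr (_ + _); apply: eq_bigr => k _; rewrite add0n /bump leq0n add1n.
Qed.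

Lemma key (T : finZmodType) (B : brace T) p n i x :
  prime p -> (n.+1 < p)%N -> #|T| = (p ^ n)%N ->
  (x *+ (p ^ i) == 0) = (iter (p ^ i) (circ B x) 0 == 0).
Proof.
move=> pp np cT.
have LD u v : bstar B x (u + v) = bstar B x u + bstar B x v.
  by rewrite /bstar -!/(lam B x _) lamD opprD addrACA.
have fid y : iter (p ^ n) (lam B x) y = y by rewrite iter_lam -cT circ_pow lam1.
have nil y : iter n (bstar B x) y = 0 := nil_gen (@lam_inj _ B x) pp cT (lamD B x) fid y.
rewrite (pwF (nil x)).
have -> : \sum_(k < n) iter k (bstar B x) x *+ 'C(p ^ i, k.+1) =
   \sum_(k < n) iter k (bstar B x) (x *+ p ^ i) *+ ('C(p ^ i, k.+1) %/ p ^ i).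
  apply: eq_bigr => k _; rewrite (afMn (afiter LD k)) -mulrnA mulnC divnK //.
  apply: bin_div => //; apply: leq_ltn_trans np; by rewrite ltnS ltnW.
apply/eqP/eqP => [e|W].
  by rewrite e big1 // => k _; rewrite (iter0 LD) mul0rn.
apply: (@kill _ _ n (fun k => ('C(p ^ i, k.+1) %/ p ^ i)%N) _ LD _ nil W).
by rewrite bin1 divnn expn_gt0 prime_gt0.
Qed.

Lemma conj_pow (T : zmodType) (B : brace T) g x m :
  iter m (circ B (circ B (circ B g x) (cinv B g))) 0 =
  circ B (circ B g (iter m (circ B x) 0)) (cinv B g).
Proof.
elim: m => [|m IH] /=; first by rewrite circ0 circgV cone0.
rewrite IH !circA; congr (circ B (circ B _ _) _).
by rewrite -[circ B (circ B (circ B g x) (cinv B g)) g]circA circVg circg1.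
Qed.

Theorem lemma15 (p n i : nat) (T : finZmodType) (B : brace T) :
  prime p -> (n.+1 < p)%N -> #|T| = (p ^ n)%N ->
  is_ideal B (ann T (p ^ i)).
Proof.
move=> pp np cT.
have memI a : (a \in ann T (p ^ i)) = (a *+ p ^ i == 0) by rewrite inE.
have lamI a y : y \in ann T (p ^ i) -> lam B a y \in ann T (p ^ i).
  by rewrite !memI -(afMn (lamD B a)) => /eqP ->; rewrite (af0 (lamD B a)).
split; [split | split | ].
- by rewrite memI mul0rn.
- by move=> x y; rewrite !memI mulrnBl => /eqP -> /eqP ->; rewrite subr0.
- by rewrite memI cone0 mul0rn.
- move=> x y xI yI; have := lamI x y yI; rewrite circE !memI => /eqP h.
  by move: xI; rewrite memI mulrnDl h => /eqP ->; rewrite addr0.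
- move=> x xI.
  have -> : cinv B x = - lam B (cinv B x) x.
    by apply/eqP; rewrite -addr_eq0 -circE circVg cone0.
  by move: (lamI (cinv B x) x xI); rewrite !memI mulNrn => /eqP ->; rewrite oppr0.
- move=> g x; rewrite !memI !(@key _ B p n i _ pp np cT) conj_pow => /eqP ->.
  by rewrite circ0 circgV cone0.
- move=> a x xI; have := lamI a x xI; rewrite /bstar -/(lam B a x) !memI => /eqP h.
  by move: xI; rewrite memI mulrnBl h => /eqP ->; rewrite subr0.
Qed.
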